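(* Let $\mathcal{A}\subset\mathbb{C}^n$ be a set of atoms whose convex hull is compact, centrally symmetric, and contains a ball of positive radius around the origin. Let $x^\star,w\in\mathbb{C}^n$, $y=x^\star+w$, and let $\tau>\|w\|_{\mathcal{A}}^*$. If $\hat{x}$ is the optimal solution of $$\operatorname*{minimize}_{x\in\mathbb{C}^n}\ \tfrac{1}{2}\|x-y\|_2^2+\tau\|x\|_{\mathcal{A}},$$ then $$\frac{1}{n}\|\hat{x}-x^\star\|_2^2\le\frac{1}{n}\left(\tau\|x^\star\|_{\mathcal{A}}-\langle x^\star,w\rangle\right)\le\frac{2\tau}{n}\|x^\star\|_{\mathcal{A}}.$$
   Context: The atomic norm is the gauge $\|x\|_{\mathcal{A}}=\inf\{t>0: x\in t\,\operatorname{conv}(\mathcal{A})\}$. The real inner product on $\mathbb{C}^n$ is $\langle x,z\rangle=\operatorname{Re}(z^*x)$. The dual atomic norm is $\|z\|_{\mathcal{A}}^*=\sup_{a\in\mathcal{A}}\langle z,a\rangle$. *)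

(* Defs.v *)
From HB Require Import structures.
From mathcomp Require Import all_boot all_order all_algebra complex.
From mathcomp Require Import all_classical all_reals all_analysis.
Import numFieldNormedType.Exports.

Set Implicit Arguments.
Unset Strict Implicit.
Unset Printing Implicit Defensive.
Import Order.TTheory GRing.Theory Num.Theory.
Local Open Scope ring_scope.
Local Open Scope complex_scope.
Local Open Scope classical_set_scope.

(* Standard (norm) topology on C = R[i], so that C^n = 'cV[R[i]]_n gets the
   usual (product / norm) topology from MathComp-Analysis. *)
HB.instance Definition _ (R : rcfType) := NormedModule.copy R[i] (R[i])^o.

Section AtomicNorm.
Variables (R : realType) (n : nat).

Definition rinner (x z : 'cV[R[i]]_n) : R :=
  \sum_(k < n) complex.Re ((z k 0)^* * x k 0).

Definition sqnorm2 (x : 'cV[R[i]]_n) : R := rinner x x.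

Definition convex_hull (A : set 'cV[R[i]]_n) : set 'cV[R[i]]_n :=
  [set x | exists (k : nat) (l : 'I_k -> R) (a : 'I_k -> 'cV[R[i]]_n),
     [/\ (forall j, 0 <= l j), \sum_(j < k) l j = 1, (forall j, A (a j))
       & x = \sum_(j < k) (l j)%:C *: a j]].

Definition atomic_norm (A : set 'cV[R[i]]_n) (x : 'cV[R[i]]_n) : R :=
  inf [set t : R | 0 < t /\ exists2 u, convex_hull A u & x = t%:C *: u].

Definition dual_atomic_norm (A : set 'cV[R[i]]_n) (z : 'cV[R[i]]_n) : R :=
  sup [set rinner z a | a in A].

End AtomicNorm.

(* Main.v *)
Require Import Defs.
From HB Require Import structures.
From mathcomp Require Import all_boot all_order all_algebra complex.
From mathcomp Require Import all_classical all_reals all_analysis.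
From mathcomp Require Import ring lra.
Import numFieldNormedType.Exports.
Import Order.TTheory GRing.Theory Num.Theory.
Local Open Scope ring_scope.
Local Open Scope complex_scope.
Local Open Scope classical_set_scope.

Lemma Re_le_norm (R : rcfType) (x : R[i]) :
  `|complex.Re x| <= Num.sqrt (complex.Re x ^+ 2 + complex.Im x ^+ 2).
Proof.
rewrite -sqrtr_sqr; apply: ler_wsqrtr; rewrite lerDl; exact: sqr_ge0.
Qed.

Lemma Re_cont (R : realType) : continuous (fun z : R[i] => complex.Re z).
Proof.
move=> z B /= /nbhs_ballP [e e0 eB].
apply/nbhs_ballP; exists e%:C; first by rewrite /=; simpc.
move=> z' /= hz; apply: eB.
move: hz; rewrite -!ball_normE /= normc_def ltcR => h.
apply: le_lt_trans h; rewrite -raddfB /=.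
exact: Re_le_norm.
Qed.

Lemma coordc (R : realType) n (k : 'I_n) :
  continuous (fun x : 'cV[R[i]]_n => x k 0).
Proof. exact: coord_continuous. Qed.

Lemma sum_cont (T : topologicalType) (R : realType) (I : Type) (s : seq I)
  (F : I -> T -> R) : (forall k, continuous (F k)) ->
  continuous (fun x => \sum_(k <- s) F k x).
Proof.
move=> Fc; elim: s => [|k s IH].
  have -> : (fun x => \sum_(k <- [::]) F k x) = fun=> 0.
    by apply: funext => x; rewrite big_nil.
  move=> x; exact: cvg_cst.
have -> : (fun x => \sum_(j <- k :: s) F j x) = (F k) + (fun x => \sum_(j <- s) F j x).
  by apply: funext => x; rewrite big_cons.
move=> x; apply: (@continuousD _ R^o); [exact: Fc | exact: IH].
Qed.

Lemma rinner_cont (R : realType) n (w : 'cV[R[i]]_n) :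
  continuous (fun x => rinner x w).
Proof.
apply: sum_cont => k x.
apply: (@continuous_comp _ _ _ (fun x0 : 'cV[R[i]]_n => (w k 0)^* * x0 k 0)
   (fun z : R[i] => complex.Re z)); last exact: Re_cont.
apply: (@continuousM R[i] _ (fun=> (w k 0)^*) (fun x0 : 'cV[R[i]]_n => x0 k 0) x).
  exact: cst_continuous.
exact: coordc.
Qed.

Lemma compact_ub (R : realType) n (S : set 'cV[R[i]]_n) (w : 'cV[R[i]]_n) :
  compact S -> exists M, forall a, S a -> rinner a w <= M.
Proof.
move=> cS.
have := continuous_compact (continuous_subspaceT (@rinner_cont R n w)) cS.
move/compact_bounded => [M [_ HM]].
exists (`|M| + 1) => a Sa.
have : `|rinner a w| <= `|M| + 1.
  apply: (HM (`|M| + 1)); last by exists a.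
  by apply: le_lt_trans (ler_norm M) _; rewrite ltrDl.
exact: le_trans (ler_norm _).
Qed.

Section Alg.
Variables (R : realType) (n : nat).
Implicit Types x y z : 'cV[R[i]]_n.

Lemma rinnerC x z : rinner x z = rinner z x.
Proof.
apply: eq_bigr => k _; case: (x k 0) => a b; case: (z k 0) => c d /=; ring.
Qed.

Lemma rinnerDl x y z : rinner (x + y) z = rinner x z + rinner y z.
Proof.
rewrite /rinner -big_split /=; apply: eq_bigr => k _; rewrite mxE.
case: (x k 0) => a b; case: (y k 0) => a' b'; case: (z k 0) => c d /=; ring.
Qed.

Lemma rinnerZl (c : R) x z : rinner (c%:C *: x) z = c * rinner x z.
Proof.
rewrite /rinner mulr_sumr; apply: eq_bigr => k _; rewrite mxE.
case: (x k 0) => a b; case: (z k 0) => e d /=; ring.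
Qed.

Lemma rinnerNl x z : rinner (- x) z = - rinner x z.
Proof.
rewrite /rinner -sumrN; apply: eq_bigr => k _; rewrite mxE.
case: (x k 0) => a b; case: (z k 0) => e d /=; ring.
Qed.

Lemma rinner0l z : rinner 0 z = 0.
Proof.
rewrite /rinner big1 // => k _; rewrite mxE.
case: (z k 0) => e d /=; ring.
Qed.

Lemma rinnerBl x y z : rinner (x - y) z = rinner x z - rinner y z.
Proof. by rewrite rinnerDl rinnerNl. Qed.

Lemma rinnerDr x y z : rinner z (x + y) = rinner z x + rinner z y.
Proof. by rewrite rinnerC rinnerDl !(rinnerC z). Qed.
Lemma rinnerBr x y z : rinner z (x - y) = rinner z x - rinner z y.
Proof. by rewrite rinnerC rinnerBl !(rinnerC z). Qed.
Lemma rinnerZr (c : R) x z : rinner z (c%:C *: x) = c * rinner z x.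
Proof. by rewrite rinnerC rinnerZl rinnerC. Qed.
Lemma rinnerNr x z : rinner z (- x) = - rinner z x.
Proof. by rewrite rinnerC rinnerNl rinnerC. Qed.

Lemma rinner_suml (I : Type) (s : seq I) (F : I -> 'cV[R[i]]_n) z :
  rinner (\sum_(j <- s) F j) z = \sum_(j <- s) rinner (F j) z.
Proof.
elim: s => [|a s IH]; first by rewrite !big_nil; exact: rinner0l.
by rewrite !big_cons rinnerDl IH.
Qed.

Lemma sqnorm2_ge0 x : 0 <= sqnorm2 x.
Proof.
apply: sumr_ge0 => k _; case: (x k 0) => a b /=.
have -> : a * a - - b * b = a ^+ 2 + b ^+ 2 by ring.
by apply: addr_ge0; apply: sqr_ge0.
Qed.

Lemma sqnorm2Z (c : R) x : sqnorm2 (c%:C *: x) = c ^+ 2 * sqnorm2 x.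
Proof. by rewrite /sqnorm2 rinnerZl rinnerZr mulrA expr2. Qed.

Lemma sqnorm2B x y : sqnorm2 (x - y) = sqnorm2 x - 2 * rinner x y + sqnorm2 y.
Proof.
rewrite /sqnorm2 rinnerBl !rinnerBr (rinnerC y x); ring.
Qed.

End Alg.

Lemma zmod_id (V : zmodType) (a b c X Y : V) :
  a - X + Y - (b + c) = (a - b - c) - (X - Y).
Proof.
rewrite opprB opprD !addrA.
rewrite (addrAC a (-X) Y) (addrAC (a + Y) (-X) (-b)) (addrAC (a + Y - b) (-X) (-c)).
rewrite (addrAC a Y (-b)) (addrAC (a - b) Y (-c)).
by [].
Qed.

Lemma conv_comb (R : realType) n (A : set 'cV[R[i]]_n) u v (l : R) :
  convex_hull A u -> convex_hull A v -> 0 <= l -> l <= 1 ->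
  convex_hull A (l%:C *: u + (1 - l)%:C *: v).
Proof.
case=> k1 [l1 [a1 [l1p l1s a1A ->]]]; case=> k2 [l2 [a2 [l2p l2s a2A ->]]].
move=> l0 lle1.
have sl : forall j, @fintype.split k1 k2 (lshift k2 j) = inl j := fun j => unsplitK (inl j).
have sr : forall j, @fintype.split k1 k2 (rshift k1 j) = inr j := fun j => unsplitK (inr j).
exists (k1 + k2)%N,
  (fun j => match fintype.split j with inl j1 => l * l1 j1 | inr j2 => (1 - l) * l2 j2 end),
  (fun j => match fintype.split j with inl j1 => a1 j1 | inr j2 => a2 j2 end).
split.
- move=> j; case: (fintype.split j) => j'; apply: mulr_ge0 => //; lra.
- rewrite big_split_ord /=.
  under eq_bigr do rewrite sl.
  under [X in _ + X]eq_bigr do rewrite sr.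
  by rewrite -!mulr_sumr l1s l2s; ring.
- by move=> j; case: (fintype.split j).
- rewrite big_split_ord /= !scaler_sumr.
  congr (_ + _); apply: eq_bigr => j _; by rewrite ?sl ?sr rmorphM scalerA.
Qed.

Theorem proposition1 (R : realType) (n : nat) (A : set 'cV[R[i]]_n)
  (hcompact : compact (convex_hull A))
  (hsym : forall x, convex_hull A x -> convex_hull A (- x))
  (hball : exists2 r : R, 0 < r &
             forall x, sqnorm2 x < r ^+ 2 -> convex_hull A x)
  (xstar w : 'cV[R[i]]_n) (tau : R)
  (htau : dual_atomic_norm A w < tau)
  (xhat : 'cV[R[i]]_n)
  (hopt : forall x : 'cV[R[i]]_n,
     2^-1 * sqnorm2 (xhat - (xstar + w)) + tau * atomic_norm A xhat
     <= 2^-1 * sqnorm2 (x - (xstar + w)) + tau * atomic_norm A x) :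
  n%:R^-1 * sqnorm2 (xhat - xstar)
    <= n%:R^-1 * (tau * atomic_norm A xstar - rinner xstar w)
  /\ n%:R^-1 * (tau * atomic_norm A xstar - rinner xstar w)
    <= 2 * tau / n%:R * atomic_norm A xstar.
Proof.
set C := convex_hull A.
have [r r0 hr] := hball.
have C0 : C 0.
  by apply: hr; rewrite /sqnorm2 rinner0l exprn_gt0.
have [M HM] := @compact_ub R n _ w hcompact.
have AC : forall a, A a -> C a.
  move=> a Aa; exists 1%N, (fun=> 1), (fun=> a); split => //.
    by rewrite big_ord1.
  by rewrite big_ord1 scale1r.
have [a0 Aa0] : exists a, A a.
  case: C0 => [[|k]] [l [a [_ ls aA _]]].
    by move: ls; rewrite big_ord0 => /eqP; rewrite eq_sym oner_eq0.
  by exists (a ord0).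
set D := dual_atomic_norm A w.
have hsup : has_sup [set rinner w a | a in A].
  split; first by exists (rinner w a0), a0.
  exists M => _ [a Aa <-]; rewrite rinnerC; exact: HM (AC _ Aa).
have DA : forall a, A a -> rinner w a <= D.
  by move=> a Aa; apply: (sup_upper_bound hsup); exists a.
have DC : forall c, C c -> rinner w c <= D.
  move=> _ [k [l [a [lp ls aA ->]]]].
  rewrite rinnerC rinner_suml.
  apply: (@le_trans _ _ (\sum_(j < k) l j * D)).
    apply: ler_sum => j _; rewrite rinnerZl rinnerC.
    by apply: ler_wpM2l => //; apply: DA.
  by rewrite -mulr_suml ls mul1r.
have D0 : 0 <= D.
  have h1 := DA _ Aa0.
  have h2 := DC _ (hsym _ (AC _ Aa0)).
  rewrite rinnerNr in h2; lra.
have htau' : D < tau := htau.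
have tau0 : 0 < tau by lra.
pose S x := [set t : R | 0 < t /\ exists2 u, C u & x = t%:C *: u].
have NE : forall x, atomic_norm A x = inf (S x) by [].
have Sne : forall x, S x !=set0.
  move=> x; set q := sqnorm2 x.
  have q0 : 0 <= q by apply: sqnorm2_ge0.
  have t0 : 0 < (q + 1) / r by apply: divr_gt0 => //; lra.
  exists ((q + 1) / r); split => //.
  exists (((q + 1) / r)^-1%:C *: x); last first.
    by rewrite scalerA -rmorphM mulfV ?scale1r // gt_eqF.
  apply: hr; rewrite sqnorm2Z -/q invf_div.
  have hq : q < (q + 1) ^+ 2 by nra.
  have p0 : 0 < (r / (q + 1)) ^+ 2 by apply: exprn_gt0; apply: divr_gt0 => //; lra.
  apply: (@lt_le_trans _ _ ((r / (q + 1)) ^+ 2 * (q + 1) ^+ 2)).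
    by rewrite ltr_pM2l.
  by rewrite -exprMn divfK // gt_eqF //; lra.
have Slb : forall x, has_lbound (S x).
  by move=> x; exists 0 => t [t0 _]; apply: ltW.
have Nlb : forall x, 0 <= atomic_norm A x.
  by move=> x; apply: lb_le_inf (Sne x) _ => t [t0 _]; apply: ltW.
have Ninf : forall x t, S x t -> atomic_norm A x <= t.
  by move=> x t St; apply: (ge_inf (Slb x)).
have Nadh : forall x e, 0 < e -> exists2 t, S x t & t < atomic_norm A x + e.
  move=> x e e0; have hi : has_inf (S x) by split; [exact: Sne|exact: Slb].
  exact: (inf_adherent e0 hi).
have Nbd : forall x, rinner w x <= tau * atomic_norm A x /\
                     - rinner w x <= tau * atomic_norm A x.
  move=> x; rewrite -!ler_pdivrMl //; split;
    apply: lb_le_inf (Sne x) _ => t [t0 [u Cu ->]];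
    rewrite rinnerZr ler_pdivrMl //.
  - have := DC _ Cu; nra.
  - have := DC _ (hsym _ Cu); rewrite rinnerNr; nra.
have Nconv : forall a b s, 0 <= s -> s <= 1 ->
    atomic_norm A ((1 - s)%:C *: a + s%:C *: b)
      <= (1 - s) * atomic_norm A a + s * atomic_norm A b.
  move=> a b s s0 s1; apply/ler_addgt0Pr => e e0.
  have [ta [ta0 [ua Cua ea]] hta] := Nadh a e e0.
  have [tb [tb0 [ub Cub eb]] htb] := Nadh b e e0.
  pose T := (1 - s) * ta + s * tb.
  have T0 : 0 < T.
    rewrite /T; case: (ltrgtP s 1) => [hs|hs|->]; [nra|lra|lra].
  pose l := (1 - s) * ta / T.
  have e1 : T * l = (1 - s) * ta by rewrite mulrC /l divfK // gt_eqF.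
  have e2 : T * (1 - l) = s * tb by rewrite mulrBr mulr1 e1 /T; ring.
  have l0 : 0 <= l by apply: divr_ge0; nra.
  have l1 : l <= 1.
    have : 0 <= T * (1 - l) by rewrite e2; nra.
    rewrite pmulr_rge0 //; lra.
  have Cv := @conv_comb R n A _ _ _ Cua Cub l0 l1.
  have -> : (1 - s)%:C *: a + s%:C *: b
      = T%:C *: (l%:C *: ua + (1 - l)%:C *: ub).
    by rewrite scalerDr !scalerA -!rmorphM e1 e2 ea eb !scalerA -!rmorphM.
  apply: (@le_trans _ _ T); first by apply: Ninf; split => //; exists (l%:C *: ua + (1 - l)%:C *: ub).
  rewrite /T; nra.
set ee := xhat - xstar.
set q := sqnorm2 ee.
set Nh := atomic_norm A xhat.
set Ns := atomic_norm A xstar.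
have q0 : 0 <= q by apply: sqnorm2_ge0.
have key : forall t : R, 0 < t -> t <= 1 ->
    q - rinner w ee <= t / 2 * q + tau * (Ns - Nh).
  move=> t t0 t1.
  have h := hopt ((1 - t)%:C *: xhat + t%:C *: xstar).
  have hN := Nconv xhat xstar t (ltW t0) t1.
  have eqv : (1 - t)%:C *: xhat + t%:C *: xstar - (xstar + w)
      = (ee - w) - t%:C *: ee.
    by rewrite /ee rmorphB /= scalerBl scale1r scalerBr zmod_id.
  have eqw : xhat - (xstar + w) = ee - w by rewrite /ee opprD addrA.
  have hs : sqnorm2 ((ee - w) - t%:C *: ee)
      = sqnorm2 (ee - w) - 2 * (t * (q - rinner w ee)) + t ^+ 2 * q.
    by rewrite [LHS]sqnorm2B sqnorm2Z rinnerZr rinnerBl.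
  rewrite eqv hs eqw in h.
  have h3 : t * (q - rinner w ee) <= t * (t / 2 * q + tau * (Ns - Nh)).
    nra.
  by rewrite ler_pM2l in h3.
have fin : q <= tau * Ns - rinner xstar w.
  have hk : forall t : R, 0 < t -> t <= 1 ->
      q <= tau * Ns - rinner xstar w + t / 2 * q.
    move=> t t0 t1; have := key t t0 t1.
    have := (Nbd xhat).1; rewrite -/Nh.
    rewrite /ee rinnerBr (@rinnerC R n xstar w); lra.
  apply/ler_addgt0Pr => eps eps0.
  pose t := eps / (q + eps + 1).
  have et : t * (q + eps + 1) = eps by rewrite /t divfK // gt_eqF //; lra.
  have t0 : 0 < t by apply: divr_gt0 => //; lra.
  have t1 : t <= 1 by nra.
  have := hk t t0 t1; nra.
have hn : 0 <= n%:R^-1 :> R by rewrite invr_ge0 ler0n.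
split; first by apply: ler_wpM2l.
have := (Nbd xstar).2; rewrite -/Ns (@rinnerC R n w xstar) => h2.
have -> : 2 * tau / n%:R * Ns = n%:R^-1 * (2 * tau * Ns) by ring.
apply: ler_wpM2l => //; lra.
Qed.
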